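(* Let $j,k$ be two settings. For each $i\in\{j,k\}$ suppose $Y^i = \theta^i D^i + f^i(X^i,A^i) + \varepsilon^i$ with $E[\varepsilon^i\mid D^i,X^i,A^i]=0$ (with $D^i$ a real-valued treatment, $X^i$ observed and $A^i$ unobserved covariates), let $\theta^i_s$ denote the short-regression parameter omitting $A^i$, and let $B^i = \theta^i_s - \theta^i$ be the omitted variable bias. Assume $B^i \in [\nu^i_l,\nu^i_u]$ for known constants $\nu^i_l\le\nu^i_u$, $i\in\{j,k\}$, and assume $B^j = \rho^{jk} B^k$ for some $\rho^{jk} \in [\rho^{jk}_l, \rho^{jk}_u]$ with known constants $0<\rho^{jk}_l\le 1$ and $\rho^{jk}_u \ge 1$. Let \[ \mathbb{C}^{jk} = \{(\rho^{jk}_l-1)\nu^k_l,\ (\rho^{jk}_u-1)\nu^k_l,\ (\rho^{jk}_l-1)\nu^k_u,\ (\rho^{jk}_u-1)\nu^k_u\}, \] $c^{jk}_l = \min \mathbb{C}^{jk}$, $c^{jk}_u = \max\mathbb{C}^{jk}$, and $\mathcal{I}^i = [\theta^i_s - \nu^i_u, \theta^i_s - \nu^i_l]$. Then the true pair $(\theta^j,\theta^k)$ belongs to \[ \mathcal{J}^{jk} = \{(\theta^j,\theta^k) : \theta^j\in\mathcal{I}^j,\ \theta^k\in\mathcal{I}^k,\ \theta^j-\theta^k \in \mathcal{I}^{jk}_D\}, \] where $\mathcal{I}^{jk}_D = [(\theta^j_s-\theta^k_s) - c^{jk}_u,\ (\theta^j_s-\theta^k_s) - c^{jk}_l]$.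
   Context: For a setting $i$, the long parameter is $\theta^i = E[Y^i\alpha^i]$ with $\alpha^i = (D^i - E[D^i\mid X^i,A^i])/E[(D^i - E[D^i\mid X^i,A^i])^2]$, and the short parameter is $\theta^i_s = E[Y^i\alpha^i_s]$ with $\alpha^i_s = (D^i - E[D^i\mid X^i])/E[(D^i - E[D^i\mid X^i])^2]$. The omitted variable bias is $B^i = \theta^i_s - \theta^i$. *)

(* Defs.v *)
From Stdlib Require Import Reals.
Open Scope R_scope.

Definition ovb (theta_s theta : R) : R := theta_s - theta.

Definition c_low (rho_l rho_u nu_l nu_u : R) : R :=
  Rmin (Rmin ((rho_l - 1) * nu_l) ((rho_u - 1) * nu_l))
       (Rmin ((rho_l - 1) * nu_u) ((rho_u - 1) * nu_u)).
Definition c_up (rho_l rho_u nu_l nu_u : R) : R :=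
  Rmax (Rmax ((rho_l - 1) * nu_l) ((rho_u - 1) * nu_l))
       (Rmax ((rho_l - 1) * nu_u) ((rho_u - 1) * nu_u)).

Definition I_set (theta_s nu_l nu_u : R) (t : R) : Prop :=
  theta_s - nu_u <= t <= theta_s - nu_l.

Definition ID_set (thj_s thk_s cl cu : R) (d : R) : Prop :=
  (thj_s - thk_s) - cu <= d <= (thj_s - thk_s) - cl.

Definition J_set (thj_s thk_s nuj_l nuj_u nuk_l nuk_u rho_l rho_u : R)
    (p : R * R) : Prop :=
  I_set thj_s nuj_l nuj_u (fst p) /\ I_set thk_s nuk_l nuk_u (snd p) /\
  ID_set thj_s thk_s (c_low rho_l rho_u nuk_l nuk_u) (c_up rho_l rho_u nuk_l nuk_u)
    (fst p - snd p).

(* Main.v *)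
Require Import Defs.
From Stdlib Require Import Reals Lra Psatz.
Open Scope R_scope.

Lemma lin_between (a c x y : R) : a <= c <= y \/ True -> True.
Proof. auto. Qed.

Lemma seg (p q t : R) (Ht : 0 <= t <= 1) :
  Rmin p q <= p + t * (q - p) <= Rmax p q.
Proof.
  unfold Rmin, Rmax; destruct (Rle_dec p q); nra.
Qed.

Lemma bilin (rl ru r nl nu b : R) (Hr : rl <= r <= ru) (Hb : nl <= b <= nu) :
  c_low rl ru nl nu <= (r - 1) * b <= c_up rl ru nl nu.
Proof.
  unfold c_low, c_up.
  (* (r-1)*b between (rl-1)b and (ru-1)b; each between corner values *)
  assert (H1 : Rmin ((rl-1)*b) ((ru-1)*b) <= (r-1)*b <= Rmax ((rl-1)*b) ((ru-1)*b)).
  { unfold Rmin, Rmax; destruct (Rle_dec ((rl-1)*b) ((ru-1)*b)); destruct (Rle_dec 0 b).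
    all: split; [ | ].
    all: try nra.
    all: try (assert (0 <= (r - rl) * b) by (apply Rmult_le_pos; lra); lra).
    all: try (assert (0 <= (ru - r) * b) by (apply Rmult_le_pos; lra); lra).
    all: try (assert (0 <= (r - rl) * (-b)) by (apply Rmult_le_pos; lra); lra).
    all: try (assert (0 <= (ru - r) * (-b)) by (apply Rmult_le_pos; lra); lra). }
  assert (H2 : Rmin ((rl-1)*nl) ((rl-1)*nu) <= (rl-1)*b <= Rmax ((rl-1)*nl) ((rl-1)*nu)).
  { unfold Rmin, Rmax; destruct (Rle_dec ((rl-1)*nl) ((rl-1)*nu)); destruct (Rle_dec 0 (rl-1)).
    all: split.
    all: try (assert (0 <= (rl-1) * (b - nl)) by (apply Rmult_le_pos; lra); lra).
    all: try (assert (0 <= (rl-1) * (nu - b)) by (apply Rmult_le_pos; lra); lra).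
    all: try (assert (0 <= (1-rl) * (b - nl)) by (apply Rmult_le_pos; lra); lra).
    all: try (assert (0 <= (1-rl) * (nu - b)) by (apply Rmult_le_pos; lra); lra). }
  assert (H3 : Rmin ((ru-1)*nl) ((ru-1)*nu) <= (ru-1)*b <= Rmax ((ru-1)*nl) ((ru-1)*nu)).
  { unfold Rmin, Rmax; destruct (Rle_dec ((ru-1)*nl) ((ru-1)*nu)); destruct (Rle_dec 0 (ru-1)).
    all: split.
    all: try (assert (0 <= (ru-1) * (b - nl)) by (apply Rmult_le_pos; lra); lra).
    all: try (assert (0 <= (ru-1) * (nu - b)) by (apply Rmult_le_pos; lra); lra).
    all: try (assert (0 <= (1-ru) * (b - nl)) by (apply Rmult_le_pos; lra); lra).
    all: try (assert (0 <= (1-ru) * (nu - b)) by (apply Rmult_le_pos; lra); lra). }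
  assert (M : forall a b, (Rmin a b = a \/ Rmin a b = b) /\ Rmin a b <= a /\ Rmin a b <= b).
  { intros a c; unfold Rmin; destruct (Rle_dec a c); lra. }
  assert (N : forall a b, (Rmax a b = a \/ Rmax a b = b) /\ a <= Rmax a b /\ b <= Rmax a b).
  { intros a c; unfold Rmax; destruct (Rle_dec a c); lra. }
  destruct (M ((rl-1)*b) ((ru-1)*b)) as [[m1|m1] _]; rewrite m1 in H1;
  destruct (N ((rl-1)*b) ((ru-1)*b)) as [[n1|n1] _]; rewrite n1 in H1;
  destruct (M ((rl-1)*nl) ((rl-1)*nu)) as [[m2|m2] _]; rewrite m2 in H2;
  destruct (N ((rl-1)*nl) ((rl-1)*nu)) as [[n2|n2] _]; rewrite n2 in H2;
  destruct (M ((ru-1)*nl) ((ru-1)*nu)) as [[m3|m3] _]; rewrite m3 in H3;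
  destruct (N ((ru-1)*nl) ((ru-1)*nu)) as [[n3|n3] _]; rewrite n3 in H3;
  pose proof (M ((rl - 1) * nl) ((ru - 1) * nl)); pose proof (M ((rl - 1) * nu) ((ru - 1) * nu));
  pose proof (M (Rmin ((rl - 1) * nl) ((ru - 1) * nl)) (Rmin ((rl - 1) * nu) ((ru - 1) * nu)));
  pose proof (N ((rl - 1) * nl) ((ru - 1) * nl)); pose proof (N ((rl - 1) * nu) ((ru - 1) * nu));
  pose proof (N (Rmax ((rl - 1) * nl) ((ru - 1) * nl)) (Rmax ((rl - 1) * nu) ((ru - 1) * nu)));
  lra.
Qed.

Theorem proposition2
  (thj thk thj_s thk_s : R)
  (nuj_l nuj_u nuk_l nuk_u : R)
  (rho_l rho_u rho : R)
  (Hnuj : nuj_l <= nuj_u) (Hnuk : nuk_l <= nuk_u)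
  (Hrho_l : 0 < rho_l <= 1) (Hrho_u : 1 <= rho_u)
  (HBj : nuj_l <= ovb thj_s thj <= nuj_u)
  (HBk : nuk_l <= ovb thk_s thk <= nuk_u)
  (Hrho : rho_l <= rho <= rho_u)
  (Hjk : ovb thj_s thj = rho * ovb thk_s thk) :
  J_set thj_s thk_s nuj_l nuj_u nuk_l nuk_u rho_l rho_u (thj, thk).
Proof.
  pose proof (bilin rho_l rho_u rho nuk_l nuk_u (ovb thk_s thk) Hrho HBk) as H.
  unfold J_set, I_set, ID_set, ovb in *; simpl.
  assert (E : (rho - 1) * (thk_s - thk) = (thj_s - thj) - (thk_s - thk)) by lra.
  rewrite E in H.
  repeat split; lra.
Qed.
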